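(* Let $\mathcal{G}=(V,L)$ be a finite connected undirected graph with monitor set $M$ and non-monitor set $N=V\setminus M$, $\sigma=|N|$, with measurement paths given by Controllable Simple-path Probing (CSP). A set $S\subseteq N$ is $(\sigma-1)$-identifiable if and only if either (i) every node in $S$ is adjacent to at least two monitors, or (ii) there is a node $v\in S$ such that every node in $N\setminus\{v\}$ is adjacent to at least two monitors and $v$ is adjacent to all nodes of $N\setminus\{v\}$ and to one monitor.
   Context: Under CSP, the measurement paths $P$ are all simple paths (no repeated nodes) in $\mathcal{G}$ between two distinct monitors. A failure set is any $F\subseteq N$; a path fails iff it traverses a node of $F$. $P_F$ is the set of paths in $P$ traversing a node of $F$; $F_1,F_2$ distinguishable iff $P_{F_1}\ne P_{F_2}$. $S\subseteq N$ is $k$-identifiable if any two failure sets $F_1,F_2$ with $|F_1|,|F_2|\le k$ and $F_1\cap S\ne F_2\cap S$ are distinguishable. *)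

(* Defs.v *)
From mathcomp Require Import all_boot.
Set Implicit Arguments. Unset Strict Implicit. Unset Printing Implicit Defensive.

Section Defs.
Variables (V : finType) (e : rel V) (M : {set V}).

Definition nonmon : {set V} := ~: M.

Definition csp_path (p : seq V) : Prop :=
  exists x s, p = x :: s /\ path e x s /\ uniq p /\
    x \in M /\ last x s \in M /\ x != last x s.

Definition fails (F : {set V}) (p : seq V) : bool := has (mem F) p.

(* F1, F2 distinguishable iff P_F1 <> P_F2 *)
Definition distinguishable (F1 F2 : {set V}) : Prop :=
  exists p, csp_path p /\ fails F1 p <> fails F2 p.

Definition k_identifiable (k : nat) (S : {set V}) : Prop :=
  forall F1 F2 : {set V}, F1 \subset nonmon -> F2 \subset nonmon ->
    #|F1| <= k -> #|F2| <= k -> F1 :&: S != F2 :&: S ->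
    distinguishable F1 F2.

Definition nmon_adj (w : V) : nat := #|[set m in M | e w m]|.

End Defs.

(* Main.v *)
Require Import Defs.
From mathcomp Require Import all_boot.
Set Implicit Arguments. Unset Strict Implicit. Unset Printing Implicit Defensive.

Section H.
Variables (V : finType) (e : rel V) (M : {set V}).
Hypothesis e_sym : symmetric e.
Hypothesis e_irr : irreflexive e.

Lemma csp_nbr p y : csp_path e M p -> y \in p -> y \notin M ->
  exists a b, [/\ a \in p, b \in p, a != b, e y a & e y b].
Proof.
case=> x [s [-> [pth [un [xM [lM _]]]]]] yp yN.
have yx : y != x by apply: contraNneq yN => ->.
move: yp; rewrite inE (negPf yx) /= => ys.
case/splitPr: ys pth un lM => s1 s2.
rewrite cat_path /= last_cat /= => /and3P [p1 eay p2] un lM.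
case: s2 p2 un lM => [|b s2] /=; first by move=> _ _ lM; rewrite lM in yN.
move=> /andP [eyb _] un _.
exists (last x s1), b; split.
- have := mem_last x s1; rewrite !inE mem_cat => /orP [->//|->]; by rewrite orbT.
- by rewrite !inE mem_cat !inE eqxx !orbT.
- move: un => /andP [xn].
  rewrite cat_uniq => /and3P [_ /hasPn H _].
  have bs1 : b \notin s1 by apply: H; rewrite !inE eqxx orbT.
  have xb : x != b by apply: contraNneq xn => ->; rewrite mem_cat !inE eqxx !orbT.
  have bn : b \notin x :: s1 by rewrite inE negb_or eq_sym xb.
  by apply: contraNneq bn => <-; exact: mem_last.
- by rewrite e_sym.
- exact: eyb.
Qed.

Lemma fails_notin (F : {set V}) (p : seq V) (a : V) : ~~ fails F p -> a \in p -> a \notin F.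
Proof. by move=> /hasPn H /H. Qed.

Lemma two_mon x a b : a \in M -> b \in M -> a != b -> e x a -> e x b ->
  2 <= nmon_adj e M x.
Proof.
move=> aM bM ab xa xb; apply/card_gt1P; exists a, b; by rewrite !inE aM bM xa xb.
Qed.

Lemma notF (F : {set V}) m : F \subset nonmon M -> m \in M -> m \notin F.
Proof.
by move=> /subsetP H mM; apply/negP => /H; rewrite inE mM.
Qed.

Lemma L1 p x : csp_path e M p -> x \in p -> x \notin M ->
  ~~ fails (nonmon M :\ x) p -> 2 <= nmon_adj e M x.
Proof.
move=> cp xp xM nf.
have [a [b [ap bp ab xa xb]]] := csp_nbr cp xp xM.
have inM c : c \in p -> e x c -> c \in M.
  move=> cp' xc; apply: contraR (fails_notin nf cp') => cM.
  rewrite !inE cM andbT; apply: contraTneq xc => ->; by rewrite e_irr.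
exact: (two_mon (inM _ ap xa) (inM _ bp xb) ab xa xb).
Qed.

Lemma dist_sym (F1 F2 : {set V}) : distinguishable e M F1 F2 -> distinguishable e M F2 F1.
Proof. by case=> p [cp H]; exists p; split => // /esym. Qed.

Lemma path3 m1 v m2 : m1 \in M -> m2 \in M -> m1 != m2 -> v \notin M ->
  e v m1 -> e v m2 -> csp_path e M [:: m1; v; m2].
Proof.
move=> m1M m2M m12 vM v1 v2; exists m1, [:: v; m2]; split => //=.
rewrite e_sym v1 v2 !inE m12 /= !andbT m1M m2M; split => //; split => //.
have m1v : m1 != v by apply: contraNneq vM => <-.
have m2v : v != m2 by apply: contraNneq vM => ->.
by rewrite negb_or m1v m12 m2v.
Qed.

Lemma dist_single w (F1 F2 : {set V}) : F1 \subset nonmon M -> F2 \subset nonmon M ->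
  2 <= nmon_adj e M w -> w \notin M -> (w \in F1) != (w \in F2) ->
  distinguishable e M F1 F2.
Proof.
move=> s1 s2 /card_gt1P [a [b [ain bin ab]]] wM d.
move: ain bin; rewrite !inE => /andP [aM wa] /andP [bM wb].
exists [:: a; w; b]; split; first exact: path3.
rewrite /fails /= (negPf (notF s1 aM)) (negPf (notF s2 aM))
  (negPf (notF s1 bM)) (negPf (notF s2 bM)) /= !orbF.
by apply/eqP.
Qed.

Lemma path4 m v u m' : m \in M -> m' \in M -> m != m' -> v \notin M ->
  u \notin M -> v != u -> e v m -> e v u -> e u m' ->
  csp_path e M [:: m; v; u; m'].
Proof.
move=> mM m'M mm' vM uM vu vm evu um'; exists m, [:: v; u; m']; split => //=.
rewrite e_sym vm evu um' mM m'M mm' /=; split => //; split => //.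
have mv : m != v by apply: contraNneq vM => <-.
have mu : m != u by apply: contraNneq uM => <-.
have vm' : v != m' by apply: contraNneq vM => ->.
have um'' : u != m' by apply: contraNneq uM => ->.
by rewrite !inE !negb_or mv mu mm' vu vm' um''.
Qed.
End H.


Theorem proposition4 (V : finType) (e : rel V) (M : {set V})
  (e_sym : symmetric e) (e_irr : irreflexive e)
  (e_conn : forall x y : V, connect e x y)
  (M2 : 2 <= #|M|)
  (S : {set V}) (HS : S \subset nonmon M) :
  k_identifiable e M (#|nonmon M| - 1) S <->
  ((forall v, v \in S -> 2 <= nmon_adj e M v) \/
   (exists2 v, v \in S &
      [/\ forall w, w \in nonmon M :\ v -> 2 <= nmon_adj e M w,
          forall w, w \in nonmon M :\ v -> e v w
        & nmon_adj e M v = 1])).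
Proof.
set N := nonmon M.
have inN x : (x \in N) = (x \notin M) by rewrite inE.
have cD x : x \in N -> #|N :\ x| <= #|N| - 1.
  by move=> xN; rewrite [in X in _ <= X](cardsD1 x N) xN add1n subn1.
split.
- move=> Hid.
  case: (boolP [forall v in S, 2 <= nmon_adj e M v]) => [/forall_inP H|]; first by left.
  rewrite negb_forall_in => /existsP [v /andP [vS vlt]].
  right; exists v => //.
  have vN : v \in N by apply: (subsetP HS).
  have vM : v \notin M by rewrite -inN.
  have A : forall w, w \in N :\ v -> 2 <= nmon_adj e M w.
    move=> w wN; move: (wN); rewrite !inE => /andP [wv wM].
    have wN' : w \in N by rewrite inN.
    have := Hid (N :\ w) (N :\ v) (subsetDl _ _) (subsetDl _ _) (cD _ wN') (cD _ vN).
    case.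
      apply/eqP => /setP /(_ v); rewrite !inE eqxx vS vM eq_sym wv /=.
      by [].
    move=> p [cp].
    case: (boolP (fails (N :\ w) p)) => f1; case: (boolP (fails (N :\ v) p)) => f2 // _.
    + case/hasP: f1 => z zp; move/setD1P => [zw zN].
      have zv : z = v.
        apply/eqP; apply: contraTT (fails_notin f2 zp) => zv; rewrite negbK; exact/setD1P.
      subst z; by rewrite (L1 e_sym e_irr cp zp vM f2) in vlt.
    + case/hasP: f2 => z zp /setD1P [zv zN].
      have zw : z = w.
        apply/eqP; apply: contraTT (fails_notin f1 zp) => zw; rewrite negbK; exact/setD1P.
      subst z; exact: (L1 e_sym e_irr cp zp wM f1).
  have B : forall u, u \in N :\ v -> e v u /\ 0 < nmon_adj e M v.
    move=> u uN; move: (uN); rewrite !inE => /andP [uv uM].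
    have uN' : u \in N by rewrite inN.
    have := Hid (N :\ u) (N :\ u :\ v) (subsetDl _ _) (subset_trans (subsetDl _ _) (subsetDl _ _))
      (cD _ uN') (leq_trans (subset_leq_card (subsetDl _ _)) (cD _ uN')).
    case.
      apply/eqP => /setP /(_ v); rewrite !inE eqxx vS vM eq_sym uv /=.
      by [].
    move=> p [cp].
    case: (boolP (fails (N :\ u) p)) => f1; case: (boolP (fails (N :\ u :\ v) p)) => f2 // _; last first.
      case/hasP: f2 => z zp /setD1P [_ zN].
      by move: (fails_notin f1 zp); rewrite zN.
    case/hasP: f1 => z zp /setD1P [zu zN].
    have zv : z = v.
      apply/eqP; apply: contraTT (fails_notin f2 zp) => zv; rewrite negbK; apply/setD1P; split => //; exact/setD1P.
    subst z.
    have [a [b [ap bp ab va vb]]] := csp_nbr e_sym cp zp vM.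
    have nb c : c \in p -> e v c -> c \in M \/ c = u.
      move=> cp' vc; case: (boolP (c \in M)) => cM; [by left | right].
      apply/eqP; apply: contraTT (fails_notin f2 cp') => cu.
      rewrite negbK; apply/setD1P; split; last by apply/setD1P; split => //; rewrite inN.
      by apply: contraTneq vc => ->; rewrite e_irr.
    have pos c : c \in M -> e v c -> 0 < nmon_adj e M v.
      by move=> cM vc; apply/card_gt0P; exists c; rewrite inE cM vc.
    case: (nb a ap va) => [aM|au]; case: (nb b bp vb) => [bM|bu].
    + by rewrite (two_mon aM bM ab va vb) in vlt.
    + by subst b; split => //; exact: (pos a).
    + by subst a; split => //; exact: (pos b).
    + by subst a b; rewrite eqxx in ab.
  split => //; first by move=> w /B [].
  apply/eqP; rewrite eqn_leq; apply/andP; split; first by rewrite leqNgt.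
  have [m mM] : exists m, m \in M.
    by apply/card_gt0P; apply: leq_trans M2.
  case/connectP: (e_conn v m) => [[|y p']] /=.
    by move=> _ mv; subst m; rewrite mM in vM.
  move=> /andP [vy _] _.
  case: (boolP (y \in M)) => yM.
    by apply/card_gt0P; exists y; rewrite inE yM vy.
  apply: (proj2 (B y _)); rewrite !inE yM andbT.
  apply: contraTneq vy => ->; by rewrite e_irr.
- move=> H F1 F2 s1 s2 c1 c2 neq.
  have [x xS xd] : exists2 x, x \in S & (x \in F1) != (x \in F2).
    case: (boolP [exists x in S, (x \in F1) != (x \in F2)]) => [/exists_inP [x xS xd]|H'].
      by exists x.
    rewrite negb_exists_in in H'; move/forall_inP: H' => H'.
    case/negP: neq; apply/eqP/setP => y; rewrite !inE.
    case: (boolP (y \in S)) => yS; rewrite ?andbT ?andbF //.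
    by move/negPn: (H' y yS) => /eqP.
  have xM : x \notin M by rewrite -inN; apply: (subsetP HS).
  case: H => [Hi | [v0 v0S [HA HB Hv]]].
    exact: (dist_single e_sym s1 s2 (Hi x xS) xM xd).
  case: (boolP [exists w in N :\ v0, (w \in F1) != (w \in F2)]) => [/exists_inP [w wN wd]|H'].
    have wM : w \notin M by move: wN => /setD1P [_]; rewrite inN.
    exact: (dist_single e_sym s1 s2 (HA w wN) wM wd).
  rewrite negb_exists_in in H'; move/forall_inP: H' => H'.
  have agree w : w \in N :\ v0 -> (w \in F1) = (w \in F2).
    by move=> wN; apply/eqP; apply/negPn; apply: H'.
  have v0N : v0 \in N by apply: (subsetP HS).
  have v0M : v0 \notin M by rewrite -inN.
  have xv : x = v0.
    apply/eqP; apply: contraTT xd => xv; rewrite negbK agree //.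
    by apply/setD1P; split => //; apply: (subsetP HS).
  subst x.
  have key (G1 G2 : {set V}) : G1 \subset N -> G2 \subset N -> #|G1| <= #|N| - 1 ->
      v0 \in G1 -> v0 \notin G2 -> (forall w, w \in N :\ v0 -> (w \in G1) = (w \in G2)) ->
      distinguishable e M G1 G2.
    move=> t1 t2 d1 vG1 vG2 ag.
    have : ~~ (N \subset G1).
      apply/negP => /subset_leq_card h.
      have h' := leq_trans h d1.
      have : 0 < #|N| by apply/card_gt0P; exists v0.
      by case: #|N| h' => // n; rewrite subn1 /= ltnn.
    case/subsetPn => u uN uG1.
    have uv : u != v0 by apply: contraNneq uG1 => ->.
    have uN' : u \in N :\ v0 by apply/setD1P.
    have uM : u \notin M by rewrite -inN.
    have [m] : exists m, m \in [set m in M | e v0 m].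
      by apply/card_gt0P; rewrite -/(nmon_adj e M v0) Hv.
    rewrite inE => /andP [mM vm].
    have [m' [m'M um' mm']] : exists m', [/\ m' \in M, e u m' & m != m'].
      case/card_gt1P: (HA u uN') => a [b [ain bin ab]].
      move: ain bin; rewrite !inE => /andP [aM ua] /andP [bM ub].
      case: (eqVneq m a) => [ma|ma]; last by exists a.
      by exists b; split => //; rewrite ma.
    exists [:: m; v0; u; m']; split.
      apply: (path4 e_sym) => //; first by rewrite eq_sym.
      exact: HB.
    rewrite /fails /= vG1 orbT (negPf (notF t2 mM)) (negPf (notF t2 m'M)) (negPf vG2) /=.
    by rewrite -ag // (negPf uG1).
  have d1 : #|F1| <= #|N| - 1 by [].
  case: (boolP (v0 \in F1)) => vF1.
    have vF2 : v0 \notin F2 by move: xd; rewrite vF1; case: (v0 \in F2).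
    exact: key.
  have vF2 : v0 \in F2 by move: xd; rewrite (negPf vF1); case: (v0 \in F2).
  apply: dist_sym; apply: key => // w wN; exact/esym/agree.
Qed.
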